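(* Let $F(t)=\sum_{j\ge0}a_jt^{j+1}$ be a formal power series with $a_0=1$, let $(b_n)_{n\ge1}$ be real numbers, $\mathbf b=(b_1,b_2,\dots)$, and $G(t)=\sum_{n\ge1}b_n\frac{t^n}{n!}$. Define $$Q(t)=\tfrac12\frac{d}{dt}\bigl(F(t)^2\bigr),\qquad P(t)=\int_0^t\bigl(F'(u)\bigr)^2\,du .$$ Then: (i) the recurrence $$0=\sum_{k=1}^{n}B_{n,k}(\mathbf b)\,\frac{(k-1)!}{2}\sum_{j=0}^{k-1}a_ja_{k-1-j}\bigl[2n(j+1)(k-j)-k(k+1)\bigr]\quad\text{for all }n\ge1$$ holds if and only if $t\,\frac{d}{dt}P(G(t))-Q(G(t))=0$; and (ii) the recurrence $$0=\sum_{k=1}^{n}\sum_{j=0}^{k-1}a_ja_{k-1-j}(j+1)(k-j)\frac{(k-1)!}{2k}\sum_{s=1}^{n}\frac{b_s}{s!(n-s)!}B_{n-s,k-1}(\mathbf b)\bigl(ks(s-1)+n(n-1)\bigr)\quad\text{for all }n\ge1$$ holds if and only if $\frac{d^2}{dt^2}P(G(t))+G''(t)\,P'(G(t))=0$.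
   Context: $B_{n,k}(x_1,x_2,\dots)$ denotes the partial Bell polynomial: the sum over set partitions $\{P_1,\dots,P_k\}$ of $\{1,\dots,n\}$ into $k$ nonempty blocks of $x_{|P_1|}\cdots x_{|P_k|}$ (with $B_{0,0}=1$, $B_{n,0}=0$ for $n>0$). All series are formal power series; $P'$ denotes the derivative of $P$ as a series in its argument. (Context: $F$ is a point field diffeomorphism applied to a free scalar field, and $b_n$ is the sum of on-shell tree-level amplitudes of rooted trees with $n$ on-shell legs and one off-shell propagator leg; the two recurrences are the $m^2$-part and dot-product part of the tree-level recursion.) *)

(* Defs.v *)
From mathcomp Require Import all_boot all_order all_algebra.
Set Implicit Arguments. Unset Strict Implicit. Unset Printing Implicit Defensive.
Import Order.TTheory GRing.Theory Num.Theory.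
Local Open Scope ring_scope.

Section FPS.
Variable R : fieldType.

Definition fps := nat -> R.

Definition fps0 : fps := fun _ => 0.
Definition fps1 : fps := fun n => (n == 0%N)%:R.
Definition fps_add (f g : fps) : fps := fun n => f n + g n.
Definition fps_sub (f g : fps) : fps := fun n => f n - g n.
Definition fps_scale (c : R) (f : fps) : fps := fun n => c * f n.
Definition fps_mul (f g : fps) : fps :=
  fun n => \sum_(i < n.+1) f i * g (n - i)%N.
Definition fps_pow (f : fps) (k : nat) : fps := iter k (fps_mul f) fps1.
Definition fps_tmul (f : fps) : fps :=
  fun n => if n is m.+1 then f m else 0.
Definition fps_deriv (f : fps) : fps := fun n => n.+1%:R * f n.+1.
Definition fps_integ (f : fps) : fps :=
  fun n => if n is m.+1 then f m / m.+1%:R else 0.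
(* composition f(g(t)); meaningful (and used only) when g 0 = 0, in which
   case (g^k)_n = 0 for k > n, so the sum may be truncated at k = n. *)
Definition fps_comp (f g : fps) : fps :=
  fun n => \sum_(k < n.+1) f k * fps_pow g k n.

(* partial Bell polynomial B_{n,k}(x_1,x_2,...): sum over set partitions of
   {1..n} (here 'I_n) into k nonempty blocks of prod x_{|block|}.
   (finset's [partition P D] requires the blocks to be nonempty.) *)
Definition bell_partial (n k : nat) (x : nat -> R) : R :=
  \sum_(P : {set {set 'I_n}} | partition P [set: 'I_n] && (#|P| == k))
     \prod_(B in P) x #|B|.

End FPS.

(* Main.v *)
Require Import Defs.
From mathcomp Require Import all_boot all_order all_algebra.
From mathcomp Require Import zify ring lra.
From Stdlib Require Import FunctionalExtensionality.
Set Implicit Arguments. Unset Strict Implicit. Unset Printing Implicit Defensive.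
Import Order.TTheory GRing.Theory Num.Theory.
Local Open Scope ring_scope.

Section Bell.
Variables (R : fieldType) (x : nat -> R) (T : finType).

Definition bD (D : {set T}) k := \sum_(P : {set {set T}} | partition P D && (#|P| == k))
     \prod_(B in P) x #|B|.

Lemma bD0 D : bD D 0 = (D == set0)%:R.
Proof.
rewrite /bD; have [->|nD] := eqP.
  rewrite (big_pred1 set0) ?big_set0 // => P.
  by rewrite partition_set0 cards_eq0 andbb.
rewrite big_pred0 // => P; apply/negP => /andP[pP]; rewrite cards_eq0 => /eqP P0.
by apply: nD; rewrite -(cover_partition pP) P0 /cover big_set0.
Qed.

Lemma bDset0 k : bD set0 k.+1 = 0.
Proof.
rewrite /bD big_pred0 // => P; apply/negP => /andP[].
by rewrite partition_set0 => /eqP ->; rewrite cards0.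
Qed.

Lemma bD_cond (D A : {set T}) (P' : {set {set T}}) (x0 : T) k : x0 \in A -> A \subset D ->
  partition (A |: P') D && (#|A |: P'| == k.+1) &&
      (pblock (A |: P') x0 == A) && ((A |: P') :\ A == P') =
  partition P' (D :\: A) && (#|P'| == k).
Proof.
move=> x0A AD; apply/idP/idP.
  case/andP => /andP[/andP[pP cP] _] /eqP eP.
  have AP : A \in A |: P' by rewrite setU11.
  rewrite -eP partitionD1 //=.
  move: cP; rewrite (cardsD1 A) AP /= eqSS.
  by [].
case/andP => pP' /eqP cP'.
have AnP : A \notin P'.
  apply/negP => AP; have := partitionS pP' AP => /subsetP /(_ x0 x0A).
  by rewrite inE x0A.
have A0 : A != set0 by apply/set0Pn; exists x0.
have dis : [disjoint A & D :\: A].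
  by rewrite disjoint_sym disjoint_subset; apply/subsetP => y; rewrite !inE => /andP[].
have pU := partitionU1 pP' A0 dis.
have DA : A :|: (D :\: A) = D by rewrite setDE setUIr setUCr setIT; apply/setUidPr.
rewrite DA in pU; rewrite pU /= cardsU1 AnP cP' /= eqxx /=.
rewrite setU1K // eqxx andbT.
by rewrite (def_pblock (partition_trivIset pU) (setU11 A P') x0A).
Qed.

Lemma bD_rec (D : {set T}) (x0 : T) k : x0 \in D ->
  bD D k.+1 = \sum_(A : {set T} | (x0 \in A) && (A \subset D)) x #|A| * bD (D :\: A) k.
Proof.
move=> x0D; rewrite /bD.
rewrite (partition_big (fun P => pblock P x0) (fun A => (x0 \in A) && (A \subset D))); last first.
  move=> P /andP[pP _].
  have cP : x0 \in cover P by rewrite (cover_partition pP).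
  by rewrite mem_pblock cP /= (partitionS pP) // pblock_mem.
apply: eq_bigr => A /andP[x0A AD].
rewrite mulr_sumr.
rewrite (reindex_onto (fun P' => A |: P') (fun P => P :\ A)); last first.
  move=> P /andP[/andP[pP _] /eqP <-]; rewrite setD1K // pblock_mem //.
  by rewrite (cover_partition pP).
apply: eq_big => [P'|P']; first exact: bD_cond.
rewrite bD_cond // => /andP[pP' _].
have AnP : A \notin P'.
  apply/negP => AP; have := partitionS pP' AP => /subsetP /(_ x0 x0A).
  by rewrite inE x0A.
by rewrite big_setU1.
Qed.

Lemma sum_subsets (B : {set T}) (f : nat -> R) :
  \sum_(A : {set T} | A \subset B) f #|A| =
  \sum_(s < #|B|.+1) 'C(#|B|, s)%:R * f s.
Proof.
rewrite (partition_big (fun A : {set T} => (inord #|A| : 'I_#|B|.+1)) xpredT) //.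
apply: eq_bigr => s _.
transitivity (\sum_(A in [set A : {set T} | A \subset B & #|A| == s]) f s).
  apply: eq_big => A.
    rewrite inE; case AB: (A \subset B) => //=.
    rewrite -val_eqE /= inordK // ltnS; exact: subset_leq_card.
  by case/andP => AB /eqP <-; rewrite inordK // ltnS; exact: subset_leq_card.
by rewrite sumr_const cards_draws mulr_natl.
Qed.

Lemma bD_eq (c : nat -> nat -> R) :
  c 0%N 0%N = 1 -> (forall m, c m.+1 0%N = 0) -> (forall k, c 0%N k.+1 = 0) ->
  (forall m k, c m.+1 k.+1 = \sum_(s < m.+1) 'C(m, s)%:R * x s.+1 * c (m - s)%N k) ->
  forall D k, bD D k = c #|D| k.
Proof.
move=> c00 cm0 c0k crec D; have [n] := ubnP #|D|; elim: n D => // n IH D leD k.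
case: k => [|k].
  rewrite bD0; have [->|nD] := eqP; first by rewrite cards0 c00.
  case cD: #|D| => [|m]; last by rewrite cm0.
  by move: cD => /eqP; rewrite cards_eq0 => /eqP.
have [->|[x0 x0D]] := set_0Vmem D; first by rewrite bDset0 cards0 c0k.
rewrite (bD_rec _ x0D) (cardsD1 x0 D) x0D add1n crec.
set B := D :\ x0.
have ltB : (#|B| < n)%N by move: leD; rewrite (cardsD1 x0 D) x0D.
rewrite (reindex_onto (fun A' => x0 |: A') (fun A => A :\ x0)); last first.
  by move=> A /andP[x0A _]; rewrite setD1K.
under eq_bigr => A' /andP[/andP[_ sub] /eqP eA'].
  have x0A' : x0 \notin A' by rewrite -eA' setD11.
  have A'B : A' \subset B.
    by rewrite subsetD1 x0A' andbT; apply: subset_trans sub; apply: subsetUr.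
  have eD : D :\: (x0 |: A') = B :\: A'.
    by apply/setP => y; rewrite !inE negb_or andbA [(y != x0) && _]andbC.
  rewrite eD IH; last first.
    by apply: leq_ltn_trans ltB; apply: subset_leq_card; apply: subsetDl.
  rewrite cardsD (setIidPr A'B) cardsU1 x0A' add1n.
  over.
rewrite /=.
have -> : \sum_(A' : {set T} | (x0 \in x0 |: A') && (x0 |: A' \subset D) &&
     ((x0 |: A') :\ x0 == A')) x #|A'|.+1 * c (#|B| - #|A'|)%N k =
   \sum_(A' : {set T} | A' \subset B) x #|A'|.+1 * c (#|B| - #|A'|)%N k.
  apply: eq_bigl => A'; rewrite setU11 /= subUset sub1set x0D /= subsetD1.
  case: (boolP (x0 \in A')) => x0A'.
    rewrite andbF; apply/negbTE; rewrite negb_and; apply/orP; right; apply/eqP => e.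
    by move: x0A'; rewrite -e setD11.
  by rewrite setU1K // eqxx !andbT.
rewrite (sum_subsets B (fun s => x s.+1 * c (#|B| - s)%N k)); apply: eq_bigr => s _; by rewrite mulrA.
Qed.

End Bell.

Section FpsLemmas.
Variable R : realFieldType.

Lemma pow_poly (f : fps R) N k n : (n < N)%N ->
  fps_pow f k n = ((\poly_(i < N) f i) ^+ k)`_n.
Proof.
elim: k n => [|k IH] n ltn.
  by rewrite expr0 coef1.
rewrite exprS coefM /= /fps_mul; apply: eq_bigr => i _.
rewrite coef_poly (leq_ltn_trans (leq_ord i) ltn) -IH //.
by apply: leq_ltn_trans ltn; apply: leq_subr.
Qed.

Lemma pow_small (G : fps R) k n : G 0%N = 0 -> (n < k)%N -> fps_pow G k n = 0.
Proof.
move=> G0; elim: k n => [|k IH] n // ltn.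
rewrite /= /fps_mul big1 // => [[[|i] /= lti]] _; first by rewrite G0 mul0r.
by rewrite IH ?mulr0 //; lia.
Qed.

Lemma pow_deriv (G : fps R) k m :
  m.+1%:R * fps_pow G k.+1 m.+1 =
  k.+1%:R * \sum_(s < m.+1) (s.+1%:R * G s.+1) * fps_pow G k (m - s)%N.
Proof.
set p := \poly_(i < m.+2) G i.
rewrite (pow_poly _ _ (ltnSn m.+1)) -/p.
have := coef_deriv (p ^+ k.+1) m.
rewrite deriv_exp coefMn coefM /= => e.
rewrite mulr_natl -e [RHS]mulr_natl; congr (_ *+ _).
apply: eq_bigr => s _; rewrite coef_deriv coef_poly.
rewrite ltnS (leq_trans (ltn_ord s)) // (pow_poly _ _ (_ : (m - s < m.+2)%N)).
  by rewrite mulr_natl.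
by rewrite ltnS (leq_trans (leq_subr _ _)).
Qed.

Lemma natn0 n : (n.+1%:R : R) != 0.
Proof. by rewrite pnatr_eq0. Qed.
Lemma factn0 n : ((n`!)%:R : R) != 0.
Proof. by rewrite pnatr_eq0 -lt0n fact_gt0. Qed.

Definition Gb (b : nat -> R) : fps R := fun n => if n is m.+1 then b n / (n`!)%:R else 0.
Definition cc b m k := (m`!)%:R / (k`!)%:R * fps_pow (Gb b) k m.

Lemma cc_rec b m k :
  cc b m.+1 k.+1 = \sum_(s < m.+1) 'C(m, s)%:R * b s.+1 * cc b (m - s)%N k.
Proof.
have H := pow_deriv (Gb b) k m.
rewrite /cc.
have -> : fps_pow (Gb b) k.+1 m.+1 = k.+1%:R / m.+1%:R *
   \sum_(s < m.+1) s.+1%:R * Gb b s.+1 * fps_pow (Gb b) k (m - s)%N.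
  apply: (mulfI (natn0 m)); rewrite H; field; by rewrite nat1r natn0.
rewrite !factS !natrM mulrA mulr_sumr; apply: eq_bigr => s _.
rewrite /= factS natrM -(bin_fact (leq_ord s)) !natrM.
field. all: rewrite ?nat1r ?natn0 ?factn0 //.
Qed.

End FpsLemmas.

Section Key.
Variable R : realFieldType.

Lemma bell_pow (b : nat -> R) n k :
  bell_partial n k b = (n`!)%:R / (k`!)%:R * fps_pow (Gb b) k n.
Proof.
rewrite -[bell_partial n k b]/(bD b [set: 'I_n] k).
rewrite (@bD_eq _ b _ (cc b)) ?cardsT ?card_ord //.
- by rewrite /cc /= /fps1 /= divr1 !mulr1.
- by move=> m; rewrite /cc /= /fps1 /= mulr0.
- by move=> k'; rewrite /cc pow_small ?mulr0.
- exact: cc_rec.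
Qed.

Lemma pow_bell (b : nat -> R) n k :
  fps_pow (Gb b) k n = (k`!)%:R / (n`!)%:R * bell_partial n k b.
Proof. rewrite bell_pow. have := factn0 R n. have := factn0 R k. move: (n`!%:R) (k`!%:R) => x y hx hy. field. by rewrite hx hy. Qed.
End Key.

Section Main.
Variable R : realFieldType.
Variables a b : nat -> R.

Definition Fa : fps R := fun n => if n is m.+1 then a m else 0.
Definition Qa : fps R := fps_scale (2%:R)^-1 (fps_deriv (fps_mul Fa Fa)).
Definition Pa : fps R := fps_integ (fps_mul (fps_deriv Fa) (fps_deriv Fa)).

Definition S1 k := \sum_(j < k) a j * a (k.-1 - j)%N * (j.+1)%:R * (k - j)%:R.
Definition S0 k := \sum_(j < k) a j * a (k.-1 - j)%N.

Lemma Pa0 : Pa 0%N = 0. Proof. by []. Qed.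
Lemma PaS k : Pa k.+1 = S1 k.+1 / k.+1%:R.
Proof.
rewrite /Pa /fps_integ /S1 /=; congr (_ / _); apply: eq_bigr => j _.
rewrite /fps_deriv /= subSn ?(leq_ord j) //; ring.
Qed.

Lemma Qa0 : Qa 0%N = 0.
Proof. rewrite /Qa /fps_scale /fps_deriv /fps_mul !big_ord_recr big_ord0 /=; ring. Qed.

Lemma QaS k : Qa k = 2%:R^-1 * (k.+1%:R * S0 k).
Proof.
rewrite /Qa /fps_scale /fps_deriv /fps_mul /S0; congr (_ * (_ * _)).
rewrite big_ord_recl /= mul0r add0r big_ord_recr /= subnn mulr0 addr0.
apply: eq_bigr => i _; rewrite subSS; case: k i => [[]//|k] i /=.
by rewrite subSn // -ltnS.
Qed.

Definition Ri n := \sum_(1 <= k < n.+1)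
            bell_partial n k b * ((k.-1)`!%:R / 2%:R) *
            \sum_(j < k) a j * a (k.-1 - j)%N *
               (2%:R * n%:R * (j.+1)%:R * (k - j)%:R - k%:R * (k.+1)%:R).

Lemma coef_i m :
  fps_sub (fps_tmul (fps_deriv (fps_comp Pa (Gb b)))) (fps_comp Qa (Gb b)) m.+1
  = Ri m.+1 / (m.+1)`!%:R.
Proof.
rewrite /fps_sub /fps_tmul /fps_deriv /fps_comp mulr_sumr -sumrB.
rewrite big_ord_recl Pa0 Qa0 !mul0r mulr0 subrr add0r.
rewrite /Ri big_add1 big_mkord mulr_suml; apply: eq_bigr => k _.
rewrite !lift0 PaS QaS pow_bell /=.
have -> : \sum_(j < k.+1) a j * a (k - j)%N *
     (2%:R * m.+1%:R * j.+1%:R * (k.+1 - j)%:R - k.+1%:R * k.+2%:R) =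
   2%:R * m.+1%:R * S1 k.+1 - k.+1%:R * k.+2%:R * S0 k.+1.
  by rewrite /S1 /S0 !mulr_sumr -sumrB; apply: eq_bigr => j _ /=; ring.
rewrite factS natrM.
have := natn0 R k; have := factn0 R k; have := factn0 R m.+1.
move: (k`!%:R) (m.+1`!%:R) => x y hy hx hk.
field; rewrite ?hx ?hy ?nat1r ?natn0 //.
Qed.


Lemma part_i :
  (forall n : nat, (0 < n)%N -> 0 = Ri n) <->
  fps_sub (fps_tmul (fps_deriv (fps_comp Pa (Gb b)))) (fps_comp Qa (Gb b)) = fps0 R.
Proof.
split.
  move=> H; apply: functional_extensionality => -[|m].
    by rewrite /fps_sub /fps_comp big_ord1 Qa0 mul0r subr0.
  by rewrite coef_i -H // mul0r.
move=> E [//|m] _.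
have := f_equal (fun f => f m.+1) E; rewrite coef_i /fps0 => e.
have -> : Ri m.+1 = Ri m.+1 / (m.+1)`!%:R * (m.+1)`!%:R.
  by rewrite mulfVK // factn0.
by rewrite e mul0r.
Qed.

Lemma pow_trunc N r (f : nat -> R) : (r < N)%N ->
  \sum_(k < N) f k * fps_pow (Gb b) k r = \sum_(k < r.+1) f k * fps_pow (Gb b) k r.
Proof.
move=> rN; rewrite [RHS](big_ord_widen N (fun k => f k * fps_pow (Gb b) k r)) //.
rewrite [RHS]big_mkcond; apply: eq_bigr => k _; case: ifP => // /negbT.
by rewrite -leqNgt => h; rewrite pow_small ?mulr0.
Qed.

Lemma pow_S k n : fps_pow (Gb b) k.+1 n = \sum_(s < n) Gb b s.+1 * fps_pow (Gb b) k (n - s.+1)%N.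
Proof.
case: n => [|n]; first by rewrite big_ord0 pow_small.
by rewrite /= /fps_mul big_ord_recl /= mul0r add0r.
Qed.


Lemma GbS n : Gb b n.+1 = b n.+1 / (n.+1)`!%:R. Proof. by []. Qed.

Definition Rii n := \sum_(1 <= k < n.+1)
            \sum_(j < k) a j * a (k.-1 - j)%N * (j.+1)%:R * (k - j)%:R *
               ((k.-1)`!%:R / (2%:R * k%:R)) *
               \sum_(1 <= s < n.+1)
                  b s / ((s`!)%:R * ((n - s)`!)%:R) * bell_partial (n - s) k.-1 b *
                  (k * s * (s - 1) + n * (n - 1))%:R.

Lemma Rii_split n : 2%:R * Rii n = \sum_(k < n) \sum_(s < n)
   (S1 k.+1 * (s.+1 * s)%:R * Gb b s.+1 * fps_pow (Gb b) k (n - s.+1)%N +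
    (n * (n - 1))%:R * (Pa k.+1 * (Gb b s.+1 * fps_pow (Gb b) k (n - s.+1)%N))).
Proof.
rewrite /Rii big_add1 succnK big_mkord mulr_sumr; apply: eq_bigr => k _.
rewrite PaS -!mulr_suml -/(S1 k.+1) big_add1 succnK big_mkord !mulr_sumr; apply: eq_bigr => s _.
rewrite bell_pow subn1 (succnK s) GbS.
have := natn0 R k; have := factn0 R k; have := factn0 R (n - s.+1); have := factn0 R s.+1.
move: (k`!%:R) ((n - s.+1)`!%:R) (s.+1`!%:R) => x y z hz hy hx hk.
rewrite (_ : ((k.+1 * s.+1 * s + n * (n - 1))%N%:R : R) =
   k.+1%:R * (s.+1%:R * s%:R) + n%:R * (n - 1)%:R); last by rewrite natrD !natrM mulrA.
rewrite (_ : ((s.+1 * s)%N%:R : R) = s.+1%:R * s%:R); last by rewrite natrM.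
rewrite (_ : ((n * (n - 1))%N%:R : R) = n%:R * (n - 1)%:R); last by rewrite natrM.
field; rewrite ?hx ?hy ?hz ?nat1r ?natn0 //.
Qed.


Lemma coef_ii m :
  fps_add (fps_deriv (fps_deriv (fps_comp Pa (Gb b))))
          (fps_mul (fps_deriv (fps_deriv (Gb b))) (fps_comp (fps_deriv Pa) (Gb b))) m
  = 2%:R * Rii m.+2.
Proof.
rewrite Rii_split.
under eq_bigr => k _ do rewrite big_split.
rewrite big_split /fps_add [RHS]addrC; congr (_ + _); symmetry.
  transitivity (\sum_(k < m.+2) (m.+2 * (m.+2 - 1))%N%:R * (Pa k.+1 * fps_pow (Gb b) k.+1 m.+2)).
    by apply: eq_bigr => k _; rewrite pow_S !mulr_sumr.
  rewrite /fps_deriv /fps_comp [in RHS]big_ord_recl Pa0 mul0r add0r !mulr_sumr.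
  apply: eq_bigr => k _; rewrite lift0 (_ : ((m.+2 * (m.+2 - 1))%N%:R : R) = m.+2%:R * m.+1%:R).
    by ring.
  by rewrite subn1 /= natrM.
rewrite exchange_big big_ord_recl big1 ?add0r; last first.
  by move=> k _; rewrite muln0 mulr0 !mul0r.
rewrite /fps_mul /= add0r; apply: eq_bigr => i _.
rewrite (_ : bump 0 i = i.+1) // -(GbS i.+1) subSS.
rewrite (pow_trunc (fun k => S1 k.+1 * (i.+2 * i.+1)%:R * Gb b i.+2)); last by rewrite ltnS (leq_trans (leq_subr _ _)).
rewrite /fps_comp mulr_sumr; apply: eq_bigr => k _.
rewrite /fps_deriv PaS natrM.
have := natn0 R k; move: (k.+1%:R) => x hx; field; exact: hx.
Qed.


Lemma Rii1 : Rii 1 = 0.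
Proof.
rewrite /Rii !big_nat1 big1 // => j _. by rewrite [X in _ * X]mulr0 mulr0.
Qed.

Lemma part_ii :
  (forall n : nat, (0 < n)%N -> 0 = Rii n) <->
  fps_add (fps_deriv (fps_deriv (fps_comp Pa (Gb b))))
          (fps_mul (fps_deriv (fps_deriv (Gb b))) (fps_comp (fps_deriv Pa) (Gb b)))
  = fps0 R.
Proof.
split.
  move=> H; apply: functional_extensionality => m.
  by rewrite coef_ii -H // mulr0.
move=> E [//|[|m]] _; first by rewrite Rii1.
have := f_equal (fun f => f m) E; rewrite coef_ii /fps0 => /eqP.
by rewrite mulf_eq0 pnatr_eq0 /= => /eqP ->.
Qed.

End Main.


Theorem proposition5p5p2 (R : realFieldType) (a b : nat -> R) (ha0 : a 0%N = 1) :
  let F : fps R := fun n => if n is m.+1 then a m else 0 in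
  let G : fps R := fun n => if n is m.+1 then b n / (n`!)%:R else 0 in
  let Q : fps R := fps_scale (2%:R)^-1 (fps_deriv (fps_mul F F)) in
  let P : fps R := fps_integ (fps_mul (fps_deriv F) (fps_deriv F)) in
  ((forall n : nat, (0 < n)%N ->
      0 = \sum_(1 <= k < n.+1)
            bell_partial n k b * ((k.-1)`!%:R / 2%:R) *
            \sum_(j < k) a j * a (k.-1 - j)%N *
               (2%:R * n%:R * (j.+1)%:R * (k - j)%:R - k%:R * (k.+1)%:R))
   <-> fps_sub (fps_tmul (fps_deriv (fps_comp P G))) (fps_comp Q G) = fps0 R)
  /\
  ((forall n : nat, (0 < n)%N ->
      0 = \sum_(1 <= k < n.+1)
            \sum_(j < k) a j * a (k.-1 - j)%N * (j.+1)%:R * (k - j)%:R *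
               ((k.-1)`!%:R / (2%:R * k%:R)) *
               \sum_(1 <= s < n.+1)
                  b s / ((s`!)%:R * ((n - s)`!)%:R) * bell_partial (n - s) k.-1 b *
                  (k * s * (s - 1) + n * (n - 1))%:R)
   <-> fps_add (fps_deriv (fps_deriv (fps_comp P G)))
               (fps_mul (fps_deriv (fps_deriv G)) (fps_comp (fps_deriv P) G))
       = fps0 R).
Proof.
move=> F G Q P; split; [exact: (part_i a b) | exact: (part_ii a b)].
Qed.
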